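(* Let $D$ be a closed disk in the Euclidean plane whose boundary circle has circumference $8000$ (i.e. radius $4000/\pi$). Then there exist $8349$ closed rectangles, each of size $30\times 20$, all contained in $D$ and with pairwise disjoint interiors.
   Context: Rectangles may be placed at any position and with any orientation in the plane (they need not all be parallel to one another). *)

(* Defs.v *)
From Stdlib Require Import Reals.
Open Scope R_scope.

(* A placed 30 x 20 rectangle: centre (rcx, rcy), orientation angle rang.
   The closed rectangle is { c + s*(cos a, sin a) + t*(-sin a, cos a) : |s|<=15, |t|<=10 },
   described via the rotated coordinates of a point relative to the centre. *)
Record rect := mkRect { rcx : R; rcy : R; rang : R }.

Definition rcoord_u (r : rect) (x y : R) : R :=
  (x - rcx r) * cos (rang r) + (y - rcy r) * sin (rang r).
Definition rcoord_v (r : rect) (x y : R) : R :=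
  - (x - rcx r) * sin (rang r) + (y - rcy r) * cos (rang r).

Definition in_rect (r : rect) (x y : R) : Prop :=
  Rabs (rcoord_u r x y) <= 15 /\ Rabs (rcoord_v r x y) <= 10.

Definition in_rect_interior (r : rect) (x y : R) : Prop :=
  Rabs (rcoord_u r x y) < 15 /\ Rabs (rcoord_v r x y) < 10.

Definition in_disk (a b rho x y : R) : Prop :=
  (x - a) ^ 2 + (y - b) ^ 2 <= rho ^ 2.

(* Main.v *)
Require Import Defs.
From Stdlib Require Import Reals Lra Lia ZArith List.
Import ListNotations.
Open Scope R_scope.

Lemma INRf (n : nat) (z : Z) : Z.of_nat (fact n) = z -> INR (fact n) = IZR z.
Proof. intros H; rewrite INR_IZR_INZ, H; reflexivity. Qed.

Lemma PI_ub : PI <= 3142/1000.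
Proof.
 destruct (Rle_lt_dec PI (3142/1000)) as [h|h]; [exact h|exfalso].
 assert (Hc: 0 < cos (1571/1000)) by (apply cos_gt_0; lra).
 destruct (pre_cos_bound (1571/1000) 1) as [_ Hu]; try lra.
 assert (cos_approx (1571/1000) (2*(1+1)) < 0); [|lra].
 unfold cos_approx, cos_term. cbn [sum_f_R0 Nat.mul Nat.add].
 rewrite (INRf 0 1), (INRf 2 2), (INRf 4 24), (INRf 6 720), (INRf 8 40320) by (vm_compute; reflexivity).
 cbn [pow]. lra.
Qed.

Definition rowt := (bool * nat)%type.
Definition dr : rowt := (false, 0%nat).
Definition hh (v:bool) : Z := if v then 15%Z else 10%Z.
Definition hu (v:bool) : Z := if v then 10%Z else 15%Z.

Fixpoint psum (l : list rowt) (k : nat) : Z :=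
  match l, k with
  | r :: l', S k' => (2 * hh (fst r) + psum l' k')%Z
  | _, _ => 0%Z
  end.

Fixpoint loc (l : list rowt) (i : nat) : nat * nat :=
  match l with
  | nil => (0%nat, i)
  | r :: l' => if Nat.ltb i (snd r) then (0%nat, i)
               else let p := loc l' (i - snd r) in (S (fst p), snd p)
  end.

Fixpoint total (l : list rowt) : nat :=
  match l with nil => 0%nat | r :: l' => (snd r + total l')%nat end.

Definition KK : Z := (3142 * 3142)%Z.
Definition MM : Z := (4000000 * 4000000)%Z.

Definition rowok (Y : Z) (r : rowt) : bool :=
  let W := (hu (fst r) * Z.of_nat (snd r))%Z in
  Z.leb ((W * W + Y * Y) * KK) MM &&
  Z.leb ((W * W + (Y + 2 * hh (fst r)) * (Y + 2 * hh (fst r))) * KK) MM.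

Fixpoint checkrows (Y : Z) (l : list rowt) : bool :=
  match l with
  | nil => true
  | r :: l' => rowok Y r && checkrows (Y + 2 * hh (fst r))%Z l'
  end.

Lemma hh_pos v : (0 < hh v)%Z.
Proof. destruct v; simpl; lia. Qed.

Lemma psum_nonneg l k : (0 <= psum l k)%Z.
Proof.
  revert k; induction l as [|r l IH]; intros [|k]; cbn [psum]; try lia.
  specialize (IH k); pose proof (hh_pos (fst r)); lia.
Qed.

Lemma psum_le l : forall k k', (k < k')%nat -> (k < length l)%nat ->
  (psum l k + 2 * hh (fst (nth k l dr)) <= psum l k')%Z.
Proof.
  induction l as [|r l IH]; intros k k' H1 H2; simpl in H2; [lia|].
  destruct k as [|k]; destruct k' as [|k']; try lia; cbn [psum nth].
  - pose proof (psum_nonneg l k'); lia.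
  - specialize (IH k k' ltac:(lia) ltac:(lia)); lia.
Qed.

Lemma checkrows_spec l : forall Y, checkrows Y l = true ->
  forall k, (k < length l)%nat -> rowok (Y + psum l k) (nth k l dr) = true.
Proof.
  induction l as [|r l IH]; intros Y H k Hk; simpl in Hk; [lia|].
  simpl in H; apply andb_prop in H; destruct H as [H1 H2].
  destruct k as [|k]; simpl.
  - rewrite Z.add_0_r; exact H1.
  - specialize (IH _ H2 k ltac:(lia)). rewrite Z.add_assoc; exact IH.
Qed.

Lemma loc_spec l : forall i, (i < total l)%nat ->
  (fst (loc l i) < length l)%nat /\ (snd (loc l i) < snd (nth (fst (loc l i)) l dr))%nat.
Proof.
  induction l as [|r l IH]; intros i Hi; simpl in *; [lia|].
  destruct (Nat.ltb_spec i (snd r)); simpl.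
  - split; lia.
  - destruct (IH (i - snd r)%nat ltac:(lia)) as [A B]; split; [lia|exact B].
Qed.

Lemma loc_inj l : forall i i', (i < total l)%nat -> (i' < total l)%nat ->
  loc l i = loc l i' -> i = i'.
Proof.
  induction l as [|r l IH]; intros i i' Hi Hi' E; simpl in *; [lia|].
  destruct (Nat.ltb_spec i (snd r)); destruct (Nat.ltb_spec i' (snd r));
    try discriminate; inversion E; subst; try lia.
  assert (i - snd r = i' - snd r)%nat.
  { apply IH; try lia. destruct (loc l (i - snd r)), (loc l (i' - snd r)); simpl in *.
    inversion E; subst; reflexivity. }
  lia.
Qed.

Definition vv (l : list rowt) (i : nat) : bool := fst (nth (fst (loc l i)) l dr).
Definition cxZ (l : list rowt) (i : nat) : Z :=
  let p := loc l i in let r := nth (fst p) l dr in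
  (hu (fst r) * (2 * Z.of_nat (snd p) + 1 - Z.of_nat (snd r)))%Z.
Definition cyZ (B : Z) (l : list rowt) (i : nat) : Z :=
  let p := loc l i in let r := nth (fst p) l dr in
  (B + psum l (fst p) + hh (fst r))%Z.

Lemma sepZ B l i i' : (i < total l)%nat -> (i' < total l)%nat -> i <> i' ->
  (cxZ l i + hu (vv l i) <= cxZ l i' - hu (vv l i'))%Z \/
  (cxZ l i' + hu (vv l i') <= cxZ l i - hu (vv l i))%Z \/
  (cyZ B l i + hh (vv l i) <= cyZ B l i' - hh (vv l i'))%Z \/
  (cyZ B l i' + hh (vv l i') <= cyZ B l i - hh (vv l i))%Z.
Proof.
  intros Hi Hi' Hne.
  assert (Hp : loc l i <> loc l i') by (intro E; apply Hne; eapply loc_inj; eauto).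
  pose proof (loc_spec l i Hi) as [A1 A2].
  pose proof (loc_spec l i' Hi') as [A1' A2'].
  unfold cxZ, cyZ, vv.
  destruct (loc l i) as [k j] eqn:Ei, (loc l i') as [k' j'] eqn:Ei'; cbn [fst snd] in *.
  destruct (Nat.lt_total k k') as [Hk|[Hk|Hk]].
  - right; right; left. pose proof (psum_le l k k' Hk A1). lia.
  - subst k'. assert (j <> j') by (intro; subst; apply Hp; reflexivity).
    destruct (nth k l dr) as [v c]; cbn [fst snd] in *.
    destruct v; cbn [hu hh fst snd] in *; lia.
  - right; right; right. pose proof (psum_le l k' k Hk A1'). lia.
Qed.

Lemma inZ B l i : checkrows B l = true -> (i < total l)%nat ->
  exists W, (- W <= cxZ l i - hu (vv l i))%Z /\ (cxZ l i + hu (vv l i) <= W)%Z /\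
    ((W * W + (cyZ B l i - hh (vv l i)) * (cyZ B l i - hh (vv l i))) * KK <= MM)%Z /\
    ((W * W + (cyZ B l i + hh (vv l i)) * (cyZ B l i + hh (vv l i))) * KK <= MM)%Z.
Proof.
  intros Hc Hi.
  pose proof (loc_spec l i Hi) as [A1 A2].
  pose proof (checkrows_spec l B Hc _ A1) as Hr.
  unfold cxZ, cyZ, vv. unfold rowok in Hr.
  destruct (loc l i) as [k j]; cbn [fst snd] in *.
  destruct (nth k l dr) as [v c]; cbn [fst snd] in *.
  apply andb_prop in Hr; destruct Hr as [H1 H2].
  apply Z.leb_le in H1; apply Z.leb_le in H2.
  exists (hu v * Z.of_nat c)%Z.
  replace (B + psum l k + hh v - hh v)%Z with (B + psum l k)%Z by lia.
  replace (B + psum l k + hh v + hh v)%Z with (B + psum l k + 2 * hh v)%Z by lia.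
  repeat split; try assumption; destruct v; cbn [hu] in *; lia.
Qed.

Definition ang (v : bool) : R := if v then PI / 2 else 0.

Lemma rect_le cx cy v x y : in_rect (mkRect cx cy (ang v)) x y ->
  Rabs (x - cx) <= IZR (hu v) /\ Rabs (y - cy) <= IZR (hh v).
Proof.
  unfold in_rect, rcoord_u, rcoord_v, ang; simpl.
  destruct v; simpl.
  - rewrite cos_PI2, sin_PI2. intros [H1 H2].
    replace ((x - cx) * 0 + (y - cy) * 1) with (y - cy) in H1 by ring.
    replace (- (x - cx) * 1 + (y - cy) * 0) with (- (x - cx)) in H2 by ring.
    rewrite Rabs_Ropp in H2. split; assumption.
  - rewrite cos_0, sin_0. intros [H1 H2].
    replace ((x - cx) * 1 + (y - cy) * 0) with (x - cx) in H1 by ring.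
    replace (- (x - cx) * 0 + (y - cy) * 1) with (y - cy) in H2 by ring.
    split; assumption.
Qed.

Lemma rect_lt cx cy v x y : in_rect_interior (mkRect cx cy (ang v)) x y ->
  Rabs (x - cx) < IZR (hu v) /\ Rabs (y - cy) < IZR (hh v).
Proof.
  unfold in_rect_interior, rcoord_u, rcoord_v, ang; simpl.
  destruct v; simpl.
  - rewrite cos_PI2, sin_PI2. intros [H1 H2].
    replace ((x - cx) * 0 + (y - cy) * 1) with (y - cy) in H1 by ring.
    replace (- (x - cx) * 1 + (y - cy) * 0) with (- (x - cx)) in H2 by ring.
    rewrite Rabs_Ropp in H2. split; assumption.
  - rewrite cos_0, sin_0. intros [H1 H2].
    replace ((x - cx) * 1 + (y - cy) * 0) with (x - cx) in H1 by ring.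
    replace (- (x - cx) * 0 + (y - cy) * 1) with (y - cy) in H2 by ring.
    split; assumption.
Qed.

Lemma abs_le x c : Rabs x <= c -> - c <= x <= c.
Proof. unfold Rabs; destruct (Rcase_abs x); intros; lra. Qed.
Lemma abs_lt x c : Rabs x < c -> - c < x < c.
Proof. unfold Rabs; destruct (Rcase_abs x); intros; lra. Qed.

Lemma sq_bound L t U : L <= t <= U -> t * t <= L * L \/ t * t <= U * U.
Proof. intros; destruct (Rle_dec 0 t); [right|left]; nra. Qed.

Lemma final_Z (A : Z) rho : (A * KK <= MM)%Z ->
  2 * PI * rho = 8000 -> 0 < rho -> IZR A <= rho ^ 2.
Proof.
  intros H Hp Hr. pose proof PI_ub.
  apply IZR_le in H. rewrite mult_IZR in H.
  replace (IZR KK) with (3142 * 3142) in H by (unfold KK; rewrite mult_IZR; reflexivity).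
  replace (IZR MM) with (4000000 * 4000000) in H by (unfold MM; rewrite mult_IZR; reflexivity).
  assert (rho * 3142 >= 4000000) by nra.
  assert ((rho * 3142) * (rho * 3142) >= 4000000 * 4000000) by nra.
  simpl; nra.
Qed.

Definition BB : Z := (-1265)%Z.
Definition LL : list rowt := [ (false,9%nat); (false,17%nat); (false,23%nat); (false,27%nat); (false,31%nat); (false,34%nat); (false,37%nat); (false,39%nat); (false,42%nat); (false,44%nat); (false,46%nat); (false,48%nat); (false,50%nat); (false,52%nat); (false,53%nat); (false,55%nat); (true,85%nat); (false,59%nat); (false,60%nat); (true,92%nat); (true,95%nat); (false,65%nat); (false,66%nat); (false,67%nat); (false,68%nat); (false,69%nat); (false,70%nat); (true,106%nat); (true,108%nat); (true,110%nat); (true,112%nat); (true,113%nat); (true,115%nat); (false,77%nat); (false,78%nat); (true,118%nat); (false,79%nat); (true,120%nat); (true,121%nat); (false,81%nat); (true,122%nat); (true,123%nat); (true,124%nat); (false,83%nat); (true,125%nat); (true,125%nat); (false,84%nat); (true,126%nat); (true,126%nat); (true,126%nat); (true,127%nat); (true,127%nat); (true,127%nat); (true,127%nat); (true,127%nat); (true,126%nat); (true,126%nat); (true,126%nat); (true,125%nat); (true,125%nat); (false,83%nat); (true,124%nat); (false,82%nat); (false,82%nat); (true,122%nat); (true,121%nat); (true,120%nat); (true,119%nat); (false,79%nat); (false,78%nat); (true,116%nat); (false,77%nat); (true,114%nat); (true,112%nat); (true,110%nat); (true,109%nat); (true,107%nat); (true,105%nat); (false,69%nat); (false,68%nat); (false,67%nat);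 (false,66%nat); (false,65%nat); (false,64%nat); (true,93%nat); (false,61%nat); (false,59%nat); (false,58%nat); (true,84%nat); (false,54%nat); (true,78%nat); (false,50%nat); (false,48%nat); (false,46%nat); (false,44%nat); (false,42%nat); (false,39%nat); (false,37%nat); (false,34%nat); (false,31%nat); (false,27%nat); (false,23%nat); (false,17%nat); (false,9%nat) ].

Lemma LL_check : checkrows BB LL = true.
Proof. vm_compute. reflexivity. Qed.

Lemma LL_total : (8349 <= total LL)%nat.
Proof. apply Nat.leb_le. vm_compute. reflexivity. Qed.

Theorem mainTheorem3 :
  forall a b rho : R, 0 < rho -> 2 * PI * rho = 8000 ->
  exists rs : nat -> rect,
    (forall i, (i < 8349)%nat ->
       forall x y, in_rect (rs i) x y -> in_disk a b rho x y) /\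
    (forall i j, (i < 8349)%nat -> (j < 8349)%nat -> i <> j ->
       forall x y, ~ (in_rect_interior (rs i) x y /\ in_rect_interior (rs j) x y)).
Proof.
  intros a b rho Hr Hp.
  pose proof LL_total as Ht.
  exists (fun i => mkRect (a + IZR (cxZ LL i)) (b + IZR (cyZ BB LL i)) (ang (vv LL i))).
  split.
  - intros i Hi x y Hin.
    apply rect_le in Hin. destruct Hin as [H1 H2].
    apply abs_le in H1; apply abs_le in H2.
    destruct (inZ BB LL i LL_check ltac:(lia)) as [W [W1 [W2 [W3 W4]]]].
    pose proof (final_Z _ rho W3 Hp Hr) as F3.
    pose proof (final_Z _ rho W4 Hp Hr) as F4.
    rewrite plus_IZR, !mult_IZR, !minus_IZR in F3.
    rewrite plus_IZR, !mult_IZR, !plus_IZR in F4.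
    apply IZR_le in W1. rewrite opp_IZR, minus_IZR in W1.
    apply IZR_le in W2. rewrite plus_IZR in W2.
    unfold in_disk.
    assert (Hxb : - IZR W <= x - a <= IZR W) by lra.
    assert (Hx : (x - a) * (x - a) <= IZR W * IZR W) by nra.
    replace ((x - a) ^ 2 + (y - b) ^ 2) with ((x - a) * (x - a) + (y - b) * (y - b)) by ring.
    destruct (sq_bound (IZR (cyZ BB LL i) - IZR (hh (vv LL i))) (y - b)
                (IZR (cyZ BB LL i) + IZR (hh (vv LL i)))) as [h|h]; lra.
  - intros i j Hi Hj Hij x y [Hin1 Hin2].
    apply rect_lt in Hin1; apply rect_lt in Hin2.
    destruct Hin1 as [H1 H2]; destruct Hin2 as [H3 H4].
    apply abs_lt in H1, H2, H3, H4.
    destruct (sepZ BB LL i j ltac:(lia) ltac:(lia) Hij) as [S|[S|[S|S]]];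
      apply IZR_le in S; rewrite ?minus_IZR, ?plus_IZR in S; lra.
Qed.
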